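(* Let $X$ be a topological space, for each $x\in X$ let $\mathcal B_x$ be a local base at $x$, and let $A$ be a finitely non-Hausdorff subset of $X$. Then $\bigcap_{x\in A}\bigcap\{\overline{B}:B\in\mathcal B_x\}=\bigcap_{x\in A}\bigcup\{M: M$ is a finitely non-Hausdorff subset of $X$ with $x\in M\}$, and this set also equals $\bigcap_{x\in A}\bigcup\{M: M$ is a maximal finitely non-Hausdorff subset of $X$ with $x\in M\}$.
   Context: A non-empty subset $A$ of a topological space $X$ is called finitely non-Hausdorff if for every non-empty finite subset $F\subseteq A$ and every family $\{U_y:y\in F\}$ where each $U_y$ is an open neighborhood of $y$, we have $\bigcap_{y\in F}U_y\neq\emptyset$. It is maximal finitely non-Hausdorff if no finitely non-Hausdorff subset of $X$ properly contains it. *)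

(* Defs.v *)
From mathcomp Require Import all_boot all_order.
From mathcomp Require Import all_classical topology.
Set Implicit Arguments. Unset Strict Implicit. Unset Printing Implicit Defensive.
Local Open Scope classical_set_scope.

Definition local_base (T : topologicalType) (x : T) (B : set_system T) : Prop :=
  (forall b, B b -> open b /\ b x) /\
  (forall U, open U -> U x -> exists2 b, B b & b `<=` U).

Definition fin_nonHausdorff (T : topologicalType) (A : set T) : Prop :=
  A !=set0 /\
  forall (F : set T), finite_set F -> F !=set0 -> F `<=` A ->
  forall (U : T -> set T), (forall y, F y -> open (U y) /\ U y y) ->
  (\bigcap_(y in F) U y) !=set0.

Definition max_fin_nonHausdorff (T : topologicalType) (A : set T) : Prop :=
  fin_nonHausdorff A /\
  forall M : set T, fin_nonHausdorff M -> A `<=` M -> M = A.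

(* Main.v *)
Require Import Defs.
From mathcomp Require Import all_boot all_order.
From mathcomp Require Import all_classical topology.
Local Open Scope classical_set_scope.

Section Aux.
Context (T : topologicalType).

Definition cond (X : set T) : Prop :=
  forall (F : set T), finite_set F -> F !=set0 -> F `<=` X ->
  forall (U : T -> set T), (forall y, F y -> open (U y) /\ U y y) ->
  (\bigcap_(y in F) U y) !=set0.

Lemma condS (X Y : set T) : cond Y -> X `<=` Y -> cond X.
Proof.
move=> cY XY F fF F0 FX U HU; apply: (cY F fF F0 _ U HU).
by move=> y /FX /XY.
Qed.

Lemma L1 (M : set T) x z (U V : set T) : fin_nonHausdorff M -> M x -> M z ->
  open U -> U x -> open V -> V z -> U `&` V !=set0.
Proof.
move=> [_ cM] Mx Mz oU Ux oV Vz.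
have [exz|xz] := pselect (x = z); first by exists z; split => //; rewrite -exz.
pose W := fun y => if pselect (y = x) then U else V.
have Wx : W x = U by rewrite /W; case: pselect.
have Wz : W z = V.
  by rewrite /W; case: pselect => // zx; exfalso; apply: xz.
have F0 : [set x; z] !=set0 by exists x; left.
have FS : [set x; z] `<=` M by move=> y [->|->].
have HW : forall y, [set x; z] y -> open (W y) /\ W y y.
  by move=> y [->|->]; [rewrite Wx | rewrite Wz].
have [w Hw] := cM [set x; z] (finite_set2 _ _) F0 FS W HW.
exists w; split.
  by rewrite -Wx; apply: Hw; left.
by rewrite -Wz; apply: Hw; right.
Qed.

Lemma L2 (x z : T) : (forall U V, open U -> U x -> open V -> V z -> U `&` V !=set0) ->
  fin_nonHausdorff [set x; z].
Proof.
move=> H; split; first by exists x; left.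
move=> F _ F0 Fs U HU.
have [[Fx Fz]|] := pselect (F x /\ F z).
  have [ox Ux] := HU x Fx; have [oz Uz] := HU z Fz.
  have [w [w1 w2]] := H _ _ ox Ux oz Uz.
  by exists w => y /Fs [->|->].
move=> /not_andP [nFx|nFz].
  exists z => y /[dup] Fy /Fs [Ey|Ey]; last by rewrite Ey in Fy *; have [] := HU z Fy.
  by move: Fy; rewrite Ey => /nFx.
exists x => y /[dup] Fy /Fs [Ey|Ey]; first by rewrite Ey in Fy *; have [] := HU x Fy.
by move: Fy; rewrite Ey => /nFz.
Qed.

Lemma L3 (B : set_system T) x z : local_base x B ->
  ((forall b, B b -> closure b z) <->
   (forall U V, open U -> U x -> open V -> V z -> U `&` V !=set0)).
Proof.
move=> [HB1 HB2]; split.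
  move=> H U V oU Ux oV Vz.
  have [b Bb bU] := HB2 U oU Ux.
  have [w [bw Vw]] := H b Bb V (open_nbhs_nbhs (conj oV Vz)).
  by exists w; split => //; apply: bU.
move=> H b Bb W; rewrite nbhsE => -[V [oV Vz] VW].
have [ob bx] := HB1 b Bb.
have [w [bw Vw]] := H b V ob bx oV Vz.
by exists w; split => //; apply: VW.
Qed.

Lemma chain_lemma (F : set (set T)) (M0 : set T) :
  total_on F subset -> forall s : seq T,
  [set` s] `<=` (\bigcup_(X in F) X) `|` M0 ->
  [set` s] `<=` M0 \/ exists X, F X /\ [set` s] `<=` X `|` M0.
Proof.
move=> tot; elim=> [|a s IH] Hs; first by left.
have Hs' : [set` s] `<=` (\bigcup_(X in F) X) `|` M0.
  by move=> y ys; apply: Hs; rewrite /= inE ys orbT.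
have Ha : ((\bigcup_(X in F) X) `|` M0) a by apply: Hs; rewrite /= inE eqxx.
case: (IH Hs') => [sM|[X [FX sX]]]; case: Ha => [[Y FY Ya]|aM].
- right; exists Y; split => // y; rewrite /= inE => /orP[/eqP->|ys]; first by left.
  by right; apply: sM.
- left => y; rewrite /= inE => /orP[/eqP->//|ys]; exact: sM.
- have [XY|YX] := tot _ _ FX FY.
    right; exists Y; split => // y; rewrite /= inE => /orP[/eqP->|ys]; first by left.
    by case: (sX y ys) => [/XY|]; [left|right].
  right; exists X; split => // y; rewrite /= inE => /orP[/eqP->|ys]; first by left; apply: YX.
  exact: sX.
- right; exists X; split => // y; rewrite /= inE => /orP[/eqP->|ys]; first by right.
  exact: sX.
Qed.

Lemma L4 (M0 : set T) : fin_nonHausdorff M0 ->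
  exists M, max_fin_nonHausdorff M /\ M0 `<=` M.
Proof.
move=> [M00 cM0].
have chainP : forall F : set (set T), F `<=` (fun X => cond (X `|` M0)) ->
    total_on F subset -> cond ((\bigcup_(X in F) X) `|` M0).
  move=> F FP tot G fG G0 GS U HU.
  have [s Gs] := (finite_seqP G).1 fG.
  subst G.
  case: (@chain_lemma F M0 tot s GS) => [sM|[X [FX sX]]].
    exact: (cM0 _ fG G0 sM U HU).
  exact: (FP X FX _ fG G0 sX U HU).
have [A [PA Amax]] := Zorn_bigcup chainP.
exists (A `|` M0); split; last by move=> y; right.
split; first by split; [case: M00 => y; exists y; right|].
move=> N [_ cN] AN.
have AN' : A `<=` N by move=> y Ay; exact: (AN y (or_introl Ay)).
have PN : cond (N `|` M0).
  apply: (@condS _ N cN) => y [//|My]; exact: (AN y (or_intror My)).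
have NA : N `<=` A.
  case: (pselect (N `<=` A)) => // nNA.
  exfalso; exact: (Amax N (conj AN' nNA) PN).
apply/seteqP; split => [y Ny|y]; first by left; apply: NA.
exact: AN.
Qed.

End Aux.

Theorem corollary2p10 (T : topologicalType) (Bx : T -> set_system T)
  (A : set T) :
  (forall x, local_base x (Bx x)) ->
  fin_nonHausdorff A ->
  (\bigcap_(x in A) \bigcap_(B in Bx x) closure B)
    = \bigcap_(x in A) \bigcup_(M in [set M : set T | fin_nonHausdorff M /\ M x]) M
  /\
  (\bigcap_(x in A) \bigcup_(M in [set M : set T | fin_nonHausdorff M /\ M x]) M)
    = \bigcap_(x in A) \bigcup_(M in [set M : set T | max_fin_nonHausdorff M /\ M x]) M.
Proof.
move=> HB _; split; apply/seteqP; split.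
- move=> z Hz x Ax; exists [set x; z]; last by right.
  split; last by left.
  by apply: L2; apply/(@L3 T (Bx x) x z (HB x)); apply: Hz.
- move=> z Hz x Ax; have [M [fM Mx] Mz] := Hz x Ax.
  apply/(@L3 T (Bx x) x z (HB x)) => U V oU Ux oV Vz; exact: (@L1 T M x z U V fM Mx Mz oU Ux oV Vz).
- move=> z Hz x Ax; have [M [fM Mx] Mz] := Hz x Ax.
  have [N [mN MN]] := @L4 T M fM.
  by exists N; [split=> //; apply: MN | apply: MN].
- move=> z Hz x Ax; have [M [[fM _] Mx] Mz] := Hz x Ax.
  by exists M.
Qed.
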